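(* Let $\mathcal{C}$ be a peircean bicategory with monoidal product $\otimes$, and define $a\otimes^\bullet b:=\neg(\neg a\otimes\neg b)$. Then for all arrows $c:X\to Y$ and $d:Z\to W$, $c\otimes d\le c\otimes^\bullet d$.
   Context: Composition in diagrammatic order. A cartesian bicategory is a poset-enriched symmetric monoidal category $(\mathcal{C},\otimes,I)$ with, for each $X$, commutative comonoid $(\mathrm{copy}_X,\mathrm{disc}_X)$ and monoid $(\mathrm{cocopy}_X,\mathrm{codisc}_X)$ forming special Frobenius bimonoids, comonoid left adjoint to monoid, every arrow $c$ satisfying $c;\mathrm{copy}\le\mathrm{copy};(c\otimes c)$ and $c;\mathrm{disc}\le\mathrm{disc}$, with standard coherence. A map is an arrow $f$ with $f;\mathrm{copy}=\mathrm{copy};(f\otimes f)$ and $f;\mathrm{disc}=\mathrm{disc}$. A peircean bicategory is a cartesian bicategory whose homsets carry Boolean algebras (with the given order) such that $f;\neg c=\neg(f;c)$ for every map $f:X\to Y$ and arrow $c:Y\to Z$. *)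

(* Defs.v *)
(* Plain Rocq (no library needed): an explicit axiomatisation of
   peircean bicategories, following the paper's definitions.
   Composition is written in DIAGRAMMATIC order: cmp f g = f ; g. *)

Record SymMonPoset := {
  ob : Type;
  hom : ob -> ob -> Type;
  idn : forall {X : ob}, hom X X;
  cmp : forall {X Y Z : ob}, hom X Y -> hom Y Z -> hom X Z;
  cmp_assoc : forall X Y Z W (f : hom X Y) (g : hom Y Z) (h : hom Z W),
      cmp (cmp f g) h = cmp f (cmp g h);
  idn_cmp : forall X Y (f : hom X Y), cmp idn f = f;
  cmp_idn : forall X Y (f : hom X Y), cmp f idn = f;
  le : forall {X Y : ob}, hom X Y -> hom X Y -> Prop;
  le_refl : forall X Y (f : hom X Y), le f f;
  le_trans : forall X Y (f g h : hom X Y), le f g -> le g h -> le f h;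
  le_antisym : forall X Y (f g : hom X Y), le f g -> le g f -> f = g;
  cmp_mono : forall X Y Z (f f' : hom X Y) (g g' : hom Y Z),
      le f f' -> le g g' -> le (cmp f g) (cmp f' g');
  ot : ob -> ob -> ob;
  unit : ob;
  tns : forall {X Y Z W : ob}, hom X Y -> hom Z W -> hom (ot X Z) (ot Y W);
  tns_idn : forall X Z, tns (@idn X) (@idn Z) = idn;
  tns_cmp : forall X Y Z X' Y' Z' (f : hom X Y) (g : hom Y Z)
      (f' : hom X' Y') (g' : hom Y' Z'),
      tns (cmp f g) (cmp f' g') = cmp (tns f f') (tns g g');
  tns_mono : forall X Y Z W (f f' : hom X Y) (g g' : hom Z W),
      le f f' -> le g g' -> le (tns f g) (tns f' g');
  assoc : forall X Y Z, hom (ot (ot X Y) Z) (ot X (ot Y Z));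
  assoc_inv : forall X Y Z, hom (ot X (ot Y Z)) (ot (ot X Y) Z);
  assoc_iso1 : forall X Y Z, cmp (assoc X Y Z) (assoc_inv X Y Z) = idn;
  assoc_iso2 : forall X Y Z, cmp (assoc_inv X Y Z) (assoc X Y Z) = idn;
  lunit : forall X, hom (ot unit X) X;
  lunit_inv : forall X, hom X (ot unit X);
  lunit_iso1 : forall X, cmp (lunit X) (lunit_inv X) = idn;
  lunit_iso2 : forall X, cmp (lunit_inv X) (lunit X) = idn;
  runit : forall X, hom (ot X unit) X;
  runit_inv : forall X, hom X (ot X unit);
  runit_iso1 : forall X, cmp (runit X) (runit_inv X) = idn;
  runit_iso2 : forall X, cmp (runit_inv X) (runit X) = idn;
  sym : forall X Y, hom (ot X Y) (ot Y X);
  sym_inv : forall X Y, cmp (sym X Y) (sym Y X) = idn;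
  assoc_nat : forall X X' Y Y' Z Z' (f : hom X X') (g : hom Y Y') (h : hom Z Z'),
      cmp (tns (tns f g) h) (assoc X' Y' Z') = cmp (assoc X Y Z) (tns f (tns g h));
  lunit_nat : forall X Y (f : hom X Y),
      cmp (tns (@idn unit) f) (lunit Y) = cmp (lunit X) f;
  runit_nat : forall X Y (f : hom X Y),
      cmp (tns f (@idn unit)) (runit Y) = cmp (runit X) f;
  sym_nat : forall X X' Y Y' (f : hom X X') (g : hom Y Y'),
      cmp (tns f g) (sym X' Y') = cmp (sym X Y) (tns g f);
  pentagon : forall W X Y Z,
      cmp (tns (assoc W X Y) (@idn Z))
          (cmp (assoc W (ot X Y) Z) (tns (@idn W) (assoc X Y Z)))
      = cmp (assoc (ot W X) Y Z) (assoc W X (ot Y Z));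
  triangle : forall X Y,
      cmp (assoc X unit Y) (tns (@idn X) (lunit Y)) = tns (runit X) (@idn Y);
  hexagon : forall X Y Z,
      cmp (assoc X Y Z) (cmp (sym X (ot Y Z)) (assoc Y Z X))
      = cmp (tns (sym X Y) (@idn Z)) (cmp (assoc Y X Z) (tns (@idn Y) (sym X Z)))
}.

Arguments idn {_ _}.
Arguments cmp {_ _ _ _}.
Arguments le {_ _ _}.
Arguments tns {_ _ _ _ _}.
Arguments ot {_}.
Arguments unit {_}.
Arguments assoc {_}.
Arguments assoc_inv {_}.
Arguments lunit {_}.
Arguments lunit_inv {_}.
Arguments runit {_}.
Arguments runit_inv {_}.
Arguments sym {_}.

Definition mid {C : SymMonPoset} (A B D E : ob C) :
  hom C (ot (ot A B) (ot D E)) (ot (ot A D) (ot B E)) :=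
  cmp (assoc A B (ot D E))
 (cmp (tns (@idn C A) (assoc_inv B D E))
 (cmp (tns (@idn C A) (tns (sym B D) (@idn C E)))
 (cmp (tns (@idn C A) (assoc D B E))
      (assoc_inv A D (ot B E))))).

Record Cartesian (C : SymMonPoset) := {
  copy : forall X : ob C, hom C X (ot X X);
  disc : forall X : ob C, hom C X unit;
  cocopy : forall X : ob C, hom C (ot X X) X;
  codisc : forall X : ob C, hom C unit X;
  copy_assoc : forall X, cmp (copy X) (cmp (tns (copy X) idn) (assoc X X X))
                        = cmp (copy X) (tns idn (copy X));
  copy_lunit : forall X, cmp (copy X) (cmp (tns (disc X) idn) (lunit X)) = idn;
  copy_runit : forall X, cmp (copy X) (cmp (tns idn (disc X)) (runit X)) = idn;
  copy_comm : forall X, cmp (copy X) (sym X X) = copy X;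
  cocopy_assoc : forall X, cmp (assoc X X X) (cmp (tns idn (cocopy X)) (cocopy X))
                          = cmp (tns (cocopy X) idn) (cocopy X);
  cocopy_lunit : forall X, cmp (lunit_inv X) (cmp (tns (codisc X) idn) (cocopy X)) = idn;
  cocopy_runit : forall X, cmp (runit_inv X) (cmp (tns idn (codisc X)) (cocopy X)) = idn;
  cocopy_comm : forall X, cmp (sym X X) (cocopy X) = cocopy X;
  frobenius : forall X,
      cmp (tns (copy X) idn) (cmp (assoc X X X) (tns idn (cocopy X)))
      = cmp (cocopy X) (copy X);
  special : forall X, cmp (copy X) (cocopy X) = idn;
  copy_adj_unit : forall X, le idn (cmp (copy X) (cocopy X));
  copy_adj_counit : forall X, le (cmp (cocopy X) (copy X)) idn;
  disc_adj_unit : forall X, le idn (cmp (disc X) (codisc X));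
  disc_adj_counit : forall X, le (cmp (codisc X) (disc X)) idn;
  lax_copy : forall X Y (c : hom C X Y), le (cmp c (copy Y)) (cmp (copy X) (tns c c));
  lax_disc : forall X Y (c : hom C X Y), le (cmp c (disc Y)) (disc X);
  copy_ot : forall X Y, copy (ot X Y) = cmp (tns (copy X) (copy Y)) (mid X X Y Y);
  copy_unit : copy unit = lunit_inv unit;
  disc_ot : forall X Y, disc (ot X Y) = cmp (tns (disc X) (disc Y)) (lunit unit);
  disc_unit : disc unit = idn;
  cocopy_ot : forall X Y, cocopy (ot X Y) = cmp (mid X Y X Y) (tns (cocopy X) (cocopy Y));
  cocopy_unit : cocopy unit = lunit unit;
  codisc_ot : forall X Y, codisc (ot X Y) = cmp (lunit_inv unit) (tns (codisc X) (codisc Y));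
  codisc_unit : codisc unit = idn
}.

Arguments copy {_} _.
Arguments disc {_} _.
Arguments cocopy {_} _.
Arguments codisc {_} _.

Definition is_map {C : SymMonPoset} (K : Cartesian C) {X Y : ob C} (f : hom C X Y) : Prop :=
  cmp f (copy K Y) = cmp (copy K X) (tns f f) /\ cmp f (disc K Y) = disc K X.

Record BooleanHoms (C : SymMonPoset) := {
  bbot : forall {X Y : ob C}, hom C X Y;
  btop : forall {X Y : ob C}, hom C X Y;
  bmeet : forall {X Y : ob C}, hom C X Y -> hom C X Y -> hom C X Y;
  bjoin : forall {X Y : ob C}, hom C X Y -> hom C X Y -> hom C X Y;
  bneg : forall {X Y : ob C}, hom C X Y -> hom C X Y;
  bbot_le : forall X Y (c : hom C X Y), le bbot c;
  le_btop : forall X Y (c : hom C X Y), le c btop;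
  bmeet_glb : forall X Y (a b c : hom C X Y), le a (bmeet b c) <-> (le a b /\ le a c);
  bjoin_lub : forall X Y (a b c : hom C X Y), le (bjoin a b) c <-> (le a c /\ le b c);
  bdistr : forall X Y (a b c : hom C X Y),
      bmeet a (bjoin b c) = bjoin (bmeet a b) (bmeet a c);
  bneg_meet : forall X Y (c : hom C X Y), bmeet c (bneg c) = bbot;
  bneg_join : forall X Y (c : hom C X Y), bjoin c (bneg c) = btop
}.

Arguments bneg {_} _ {_ _}.

Record Peircean := {
  pc_cat : SymMonPoset;
  pc_cart : Cartesian pc_cat;
  pc_bool : BooleanHoms pc_cat;
  pc_peirce : forall X Y Z (f : hom pc_cat X Y) (c : hom pc_cat Y Z),
      is_map pc_cart f -> cmp f (bneg pc_bool c) = bneg pc_bool (cmp f c)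
}.

Definition tns_bullet (P : Peircean) {X Y Z W : ob (pc_cat P)}
  (a : hom (pc_cat P) X Y) (b : hom (pc_cat P) Z W) : hom (pc_cat P) (ot X Z) (ot Y W) :=
  bneg (pc_bool P) (tns (bneg (pc_bool P) a) (bneg (pc_bool P) b)).

(* Main.v *)
Require Import Defs.
From Corelib Require Import ssreflect.

Lemma cmp_rw {C : SymMonPoset} {X Y Z W : ob C} (f : hom C X Y) (g : hom C Y Z)
  (k : hom C X Z) (h : hom C Z W) : cmp f g = k -> cmp f (cmp g h) = cmp k h.
Proof. move=> <-. by rewrite cmp_assoc. Qed.

Lemma cmp_rw3 {C : SymMonPoset} {X Y Z W V : ob C} (f : hom C X Y) (g : hom C Y Z)
  (h : hom C Z W) (k : hom C X W) (r : hom C W V) :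
  cmp f (cmp g h) = k -> cmp f (cmp g (cmp h r)) = cmp k r.
Proof. move=> <-. by rewrite !cmp_assoc. Qed.

Lemma lcl {C : SymMonPoset} {X Y Z : ob C} (f f' : hom C X Y) (g : hom C Y Z) :
  le f f' -> le (cmp f g) (cmp f' g).
Proof. move=> H. apply: cmp_mono => //. apply: le_refl. Qed.

Lemma lcr {C : SymMonPoset} {X Y Z : ob C} (f : hom C X Y) (g g' : hom C Y Z) :
  le g g' -> le (cmp f g) (cmp f g').
Proof. move=> H. apply: cmp_mono => //. apply: le_refl. Qed.

Lemma ltr {C : SymMonPoset} {X Y : ob C} (f g h : hom C X Y) : le f g -> le g h -> le f h.
Proof. apply: le_trans. Qed.

Lemma lre {C : SymMonPoset} {X Y : ob C} (f g : hom C X Y) : f = g -> le f g.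
Proof. move=> ->. apply: le_refl. Qed.

Lemma tns_split {C : SymMonPoset} {X Y Z W : ob C} (f : hom C X Y) (g : hom C Z W) :
  tns f g = cmp (tns f idn) (tns idn g).
Proof. by rewrite -tns_cmp cmp_idn idn_cmp. Qed.

Lemma tns_split' {C : SymMonPoset} {X Y Z W : ob C} (f : hom C X Y) (g : hom C Z W) :
  tns f g = cmp (tns idn g) (tns f idn).
Proof. by rewrite -tns_cmp cmp_idn idn_cmp. Qed.

Lemma tns_cmp_l {C : SymMonPoset} {X Y Z W : ob C} (f : hom C X Y) (g : hom C Y Z) :
  tns (cmp f g) (@idn C W) = cmp (tns f idn) (tns g idn).
Proof. by rewrite -tns_cmp idn_cmp. Qed.

Lemma tns_cmp_r {C : SymMonPoset} {X Y Z W : ob C} (f : hom C X Y) (g : hom C Y Z) :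
  tns (@idn C W) (cmp f g) = cmp (tns idn f) (tns idn g).
Proof. by rewrite -tns_cmp idn_cmp. Qed.

Lemma lunit_inv_nat {C : SymMonPoset} {X Y : ob C} (f : hom C X Y) :
  cmp (lunit_inv X) (tns (@idn C unit) f) = cmp f (lunit_inv Y).
Proof.
  rewrite -[LHS]cmp_idn -(lunit_iso1 C Y) -cmp_assoc (cmp_assoc _ _ _ _ _ _ _ (lunit Y)).
  rewrite lunit_nat -!cmp_assoc lunit_iso2 idn_cmp //.
Qed.

Lemma snake {C : SymMonPoset} (K : Cartesian C) (B : ob C) :
  cmp (lunit_inv B) (cmp (tns (cmp (codisc K B) (copy K B)) idn)
   (cmp (assoc B B B) (cmp (tns idn (cmp (cocopy K B) (disc K B))) (runit B)))) = idn.
Proof.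
  rewrite tns_cmp_l tns_cmp_r !cmp_assoc.
  rewrite (cmp_rw3 _ _ _ _ _ (frobenius C K B)).
  rewrite -!cmp_assoc (cmp_assoc _ _ _ _ _ (lunit_inv B)) cocopy_lunit idn_cmp.
  by rewrite cmp_assoc copy_runit.
Qed.

Definition Psi {C : SymMonPoset} (K : Cartesian C) {A B : ob C} (m : hom C A B) :
  hom C (ot B A) unit := cmp (tns idn m) (cmp (cocopy K B) (disc K B)).
Definition Phi {C : SymMonPoset} (K : Cartesian C) {A B : ob C} (h : hom C (ot B A) unit) :
  hom C A B := cmp (lunit_inv A) (cmp (tns (cmp (codisc K B) (copy K B)) idn)
   (cmp (assoc B B A) (cmp (tns idn h) (runit B)))).

Lemma PhiPsi {C : SymMonPoset} (K : Cartesian C) {A B : ob C} (m : hom C A B) :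
  Phi K (Psi K m) = m.
Proof.
  rewrite /Phi /Psi tns_cmp_r !cmp_assoc.
  rewrite (cmp_rw _ _ _ _ (eq_sym (assoc_nat C _ _ _ _ _ _ idn idn m))).
  rewrite tns_idn !cmp_assoc.
  have E : cmp (tns (cmp (codisc K B) (copy K B)) (@idn C A)) (tns idn m)
         = cmp (tns idn m) (tns (cmp (codisc K B) (copy K B)) idn)
    by rewrite -!tns_cmp idn_cmp cmp_idn idn_cmp cmp_idn.
  rewrite (cmp_rw _ _ _ _ E) !cmp_assoc -(cmp_assoc _ _ _ _ _ (lunit_inv A)).
 rewrite lunit_inv_nat !cmp_assoc.
  by rewrite (snake K B) cmp_idn.
Qed.


Lemma meet_l {C : SymMonPoset} (Bo : BooleanHoms C) {X Y : ob C} (a b : hom C X Y) :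
  le (bmeet C Bo a b) a.
Proof. by case: (proj1 (bmeet_glb C Bo _ _ (bmeet C Bo a b) a b) (le_refl _ _ _ _)). Qed.
Lemma meet_r {C : SymMonPoset} (Bo : BooleanHoms C) {X Y : ob C} (a b : hom C X Y) :
  le (bmeet C Bo a b) b.
Proof. by case: (proj1 (bmeet_glb C Bo _ _ (bmeet C Bo a b) a b) (le_refl _ _ _ _)). Qed.
Lemma meet_glb {C : SymMonPoset} (Bo : BooleanHoms C) {X Y : ob C} (x a b : hom C X Y) :
  le x a -> le x b -> le x (bmeet C Bo a b).
Proof. move=> H1 H2. by apply (proj2 (bmeet_glb C Bo _ _ x a b)). Qed.

Lemma neg_top {C : SymMonPoset} (Bo : BooleanHoms C) {X Y : ob C} :
  bneg Bo (btop C Bo (X:=X) (Y:=Y)) = bbot C Bo.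
Proof.
  rewrite -(bneg_meet C Bo _ _ (btop C Bo)).
  apply: le_antisym; last by apply: meet_r.
  apply: meet_glb; [apply: le_btop | apply: le_refl].
Qed.

Lemma le_neg {C : SymMonPoset} (Bo : BooleanHoms C) {X Y : ob C} (a b : hom C X Y) :
  le (bmeet C Bo a b) (bbot C Bo) -> le a (bneg Bo b).
Proof.
  move=> H. apply: (ltr _ (bmeet C Bo a (bjoin C Bo b (bneg Bo b)))).
  apply: meet_glb; first by apply: le_refl.
  rewrite bneg_join. by apply: le_btop.
  rewrite bdistr. apply (proj2 (bjoin_lub C Bo _ _ _ _ _)). split.
  apply: ltr H _. by apply: bbot_le.
  by apply: meet_r.
Qed.

Lemma top_dc {C : SymMonPoset} (K : Cartesian C) {X Y : ob C} (f : hom C X Y) :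
  le f (cmp (disc K X) (codisc K Y)).
Proof.
  apply: (ltr _ (cmp f (cmp (disc K Y) (codisc K Y)))).
  rewrite -{1}(cmp_idn _ _ _ f). apply: lcr. apply: disc_adj_unit.
  rewrite -cmp_assoc. apply: lcl. apply: lax_disc.
Qed.

Lemma to_I {C : SymMonPoset} (K : Cartesian C) {E : ob C} (y : hom C E unit) :
  le y (disc K E).
Proof. have H := lax_disc C K _ _ y. by rewrite disc_unit cmp_idn in H. Qed.

Lemma disc_map {C : SymMonPoset} (K : Cartesian C) (A : ob C) : is_map K (disc K A).
Proof.
  split; last by rewrite disc_unit cmp_idn.
  rewrite copy_unit tns_split -[in RHS](cmp_idn _ _ _ (tns (disc K A) idn)).
  rewrite -(lunit_iso1 C A) !cmp_assoc lunit_inv_nat -!cmp_assoc.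
  rewrite (cmp_assoc _ _ _ _ _ (copy K A)).
  by rewrite copy_lunit idn_cmp.
Qed.

Lemma disc_bot (P : Peircean) (A B : ob (pc_cat P)) :
  cmp (disc (pc_cart P) A) (bbot _ (pc_bool P) (X:=unit) (Y:=B)) = bbot _ (pc_bool P).
Proof.
  rewrite -!neg_top pc_peirce; first by apply: disc_map.
  congr (bneg _ _).
  apply: le_antisym; first by apply: le_btop.
  apply: ltr (top_dc (pc_cart P) _) _. apply: lcr. apply: le_btop.
Qed.

Lemma x_bot (P : Peircean) (A' A B : ob (pc_cat P)) (x : hom _ A' A) :
  le (cmp x (bbot _ (pc_bool P) (X:=A) (Y:=B))) (bbot _ (pc_bool P)).
Proof.
  rewrite -(disc_bot P A) -(disc_bot P A') -cmp_assoc. apply: lcl. apply: to_I.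
Qed.

Lemma bot_I (P : Peircean) (A E : ob (pc_cat P)) (z : hom _ E unit) :
  le (cmp (bbot _ (pc_bool P) (X:=A) (Y:=E)) z) (bbot _ (pc_bool P)).
Proof.
  apply: (ltr _ (cmp (cmp (bbot _ (pc_bool P) (X:=A) (Y:=unit)) (codisc (pc_cart P) E)) z)).
  apply: lcl. apply: bbot_le.
  rewrite cmp_assoc -[X in le _ X](cmp_idn _ _ _ (bbot _ _)). apply: lcr.
  rewrite -(disc_unit _ (pc_cart P)). apply: to_I.
Qed.

Lemma totality (P : Peircean) (A B : ob (pc_cat P)) (m : hom _ A B) :
  le (cmp m (disc (pc_cart P) B)) (bbot _ (pc_bool P)) -> le m (bbot _ (pc_bool P)).
Proof.
  move=> H.
  set K := pc_cart P.
  have HPsi : le (Psi K m) (bbot _ (pc_bool P)).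
  { rewrite /Psi. apply: (ltr _ (cmp (tns idn m) (disc K (ot B B)))).
    apply: lcr. apply: lax_disc.
    rewrite disc_ot -cmp_assoc -tns_cmp idn_cmp.
    apply: (ltr _ (cmp (tns (disc K B) (bbot _ (pc_bool P))) (lunit unit))).
    apply: lcl. apply: tns_mono. apply: le_refl. exact: H.
    rewrite tns_split cmp_assoc lunit_nat -cmp_assoc. apply: x_bot. }
  rewrite -(PhiPsi K m) -(PhiPsi K (bbot _ (pc_bool P))).
  rewrite /Phi. apply: lcr. apply: lcr. apply: lcr. apply: lcl. apply: tns_mono.
  apply: le_refl. apply: ltr HPsi _. apply: bbot_le.
Qed.

Lemma adj_meet {C : SymMonPoset} (Bo : BooleanHoms C) {A X Y : ob C}
  (p : hom C A X) (q : hom C X A) (a b : hom C X Y) :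
  le idn (cmp p q) -> le (cmp q p) idn ->
  le (bmeet C Bo (cmp p a) (cmp p b)) (cmp p (bmeet C Bo a b)).
Proof.
  move=> H1 H2.
  apply: (ltr _ (cmp (cmp p q) (bmeet C Bo (cmp p a) (cmp p b)))).
  rewrite -{1}(idn_cmp _ _ _ (bmeet C Bo _ _)). by apply: lcl.
  rewrite cmp_assoc. apply: lcr. apply: meet_glb.
  - apply: (ltr _ (cmp q (cmp p a))). apply: lcr. apply: meet_l.
    rewrite -cmp_assoc -[X in le _ X](idn_cmp _ _ _ a). by apply: lcl.
  - apply: (ltr _ (cmp q (cmp p b))). apply: lcr. apply: meet_r.
    rewrite -cmp_assoc -[X in le _ X](idn_cmp _ _ _ b). by apply: lcl.
Qed.

Lemma ck {C : SymMonPoset} (K : Cartesian C) {X Y Z W : ob C}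
  (c : hom C X Y) (d : hom C Z W) :
  le (cmp (tns c d) (cmp (tns idn (disc K W)) (runit Y)))
     (cmp (cmp (tns idn (disc K Z)) (runit X)) c).
Proof.
  rewrite -cmp_assoc -tns_cmp cmp_idn.
  apply: (ltr _ (cmp (tns c (disc K Z)) (runit Y))).
  apply: lcl. apply: tns_mono. apply: le_refl. apply: lax_disc.
  rewrite tns_split' cmp_assoc runit_nat cmp_assoc. apply: le_refl.
Qed.

Theorem lemma70 (P : Peircean) (X Y Z W : ob (pc_cat P))
  (c : hom (pc_cat P) X Y) (d : hom (pc_cat P) Z W) :
  le (tns c d) (tns_bullet P c d).
Proof.
  rewrite /tns_bullet. apply: le_neg.
  set K := pc_cart P.
  set Bo := pc_bool P.
  set m := bmeet _ Bo _ _.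
  apply: totality.
  set k := cmp (tns (@idn _ Y) (disc K W)) (runit Y).
  set k' := cmp (runit_inv Y) (tns (@idn _ Y) (codisc K W)).
  set p := cmp (tns (@idn _ X) (disc K Z)) (runit X).
  set p' := cmp (runit_inv X) (tns (@idn _ X) (codisc K Z)).
  have Hk : le (disc K (ot Y W)) (cmp k (disc K Y)).
  { apply: (ltr _ (cmp (cmp k k') (disc K (ot Y W)))).
    rewrite -{1}(idn_cmp _ _ _ (disc K _)). apply: lcl.
    rewrite /k /k' cmp_assoc (cmp_rw _ _ _ _ (runit_iso1 _ _)) idn_cmp -tns_cmp idn_cmp.
    rewrite -(tns_idn _ Y W). apply: tns_mono. apply: le_refl. apply: disc_adj_unit.
    rewrite cmp_assoc. apply: lcr. apply: to_I. }
  apply: (ltr _ (cmp (cmp m k) (disc K Y))).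
  rewrite cmp_assoc. by apply: lcr.
  apply: ltr (bot_I P _ _ _). apply: lcl.
  apply: (ltr _ (cmp p (bmeet _ Bo c (bneg Bo c)))).
  apply: ltr (adj_meet Bo p p' c (bneg Bo c) _ _).
  apply: meet_glb.
  - apply: ltr (ck K c d). apply: lcl. apply: meet_l.
  - apply: ltr (ck K (bneg Bo c) (bneg Bo d)). apply: lcl. apply: meet_r.
  - rewrite /p /p' cmp_assoc (cmp_rw _ _ _ _ (runit_iso1 _ _)) idn_cmp -tns_cmp idn_cmp.
    rewrite -(tns_idn _ X Z). apply: tns_mono. apply: le_refl. apply: disc_adj_unit.
  - rewrite /p /p' !cmp_assoc (cmp_rw _ _ _ _ (eq_sym (tns_cmp_r _ _))).
    apply: (ltr _ (cmp (runit_inv X) (cmp (tns idn idn) (runit X)))).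
    apply: lcr. apply: lcl. apply: tns_mono. apply: le_refl. apply: disc_adj_counit.
    rewrite tns_idn idn_cmp runit_iso2. apply: le_refl.
  - rewrite bneg_meet. apply: x_bot.
Qed.
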